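(* Consider the integral block packing algorithm driven by a multidimensional knapsack oracle ALG, producing the integral allocation $x$, and let $\lambda\ge0$. If $ALG^t\ge\lambda\cdot OPT^t$ for every $t$, then for every integral allocation $y$ and every horizon $T$, $SW_{[1:T]}(x)\ge\frac{\lambda}{1+\lambda}SW_{[1:T]}(y)$. Similarly, if $ALG^t\ge\lambda\cdot OPT^{*t}$ for every $t$, then for every fractional allocation $y^*$ and every horizon $T$, $SW_{[1:T]}(x)\ge\frac{\lambda}{1+\lambda}SW_{[1:T]}(y^* )$.
   Context: Online block packing: $m$ resources with capacities $B_j>0$; transactions $i\in\mathcal{C}$ with arrival time $a_i\in\{1,2,\dots\}$, base value $v_i\ge0$, discount $\rho_i\in[0,1]$, demand $w_i\in\mathbb{R}_+^m$; $v_i^t:=v_i(1-\rho_i)^{t-a_i}$. A fractional allocation is $\{x_i^t\}$ with $x_i^t\in[0,1]$, $x_i^t=0$ for $t<a_i$, $\sum_tx_i^t\le1$, and $\sum_iw_{ij}x_i^t\le B_j$ for all $t,j$; integral if all entries are in $\{0,1\}$. $SW_{[1:T]}(x)=\sum_{t=1}^T\sum_ix_i^tv_i^t$. The algorithm: for each $t=1,2,\dots$ let $A_t=\{i:a_i\le t\}$, $S_t=\{i:\exists s<t,\ x_i^s=1\}$, $U_t=A_t\setminus S_t$; the oracle ALG returns a set $\{x_i^t\}_{i\in U_t}\in\{0,1\}$ (with $x_i^t=0$ for $i\notin U_t$) satisfying $\sum_iw_{ij}x_i^t\le B_j$ for all $j$, where transaction $i$ has value $v_i^t$. Let $ALG^t=\sum_ix_i^tv_i^t$,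 let $OPT^t$ be the maximum of $\sum_{i\in U_t}z_iv_i^t$ over $z\in\{0,1\}^{U_t}$ with $\sum_iw_{ij}z_i\le B_j$ for all $j$, and $OPT^{*t}$ the same maximum over $z\in[0,1]^{U_t}$. *)

(* Defs.v *)
From HB Require Import structures.
From mathcomp Require Import all_boot all_order all_algebra.
From mathcomp Require Import classical_sets reals.
Set Implicit Arguments. Unset Strict Implicit. Unset Printing Implicit Defensive.
Import Order.TTheory GRing.Theory Num.Theory.
Local Open Scope ring_scope.

Definition vt (R : realType) (I : finType) (v rho : I -> R) (a : I -> nat)
  (i : I) (t : nat) : R := v i * (1 - rho i) ^+ (t - a i).

Definition feasible (R : realType) (I : finType) (m : nat)
  (w : I -> 'I_m -> R) (B : 'I_m -> R) (z : I -> R) : Prop :=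
  forall j : 'I_m, \sum_(i : I) w i j * z i <= B j.

Definition frac_alloc (R : realType) (I : finType) (m : nat) (a : I -> nat)
  (w : I -> 'I_m -> R) (B : 'I_m -> R) (y : nat -> I -> R) : Prop :=
  [/\ (forall t i, 0 <= y t i <= 1),
      (forall t i, (t < a i)%N -> y t i = 0),
      (* sum_t y_i^t <= 1 : all partial sums of the nonnegative series *)
      (forall i T, \sum_(t < T) y t i <= 1) &
      (forall t, feasible w B (y t))].

Definition int_alloc (R : realType) (I : finType) (m : nat) (a : I -> nat)
  (w : I -> 'I_m -> R) (B : 'I_m -> R) (y : nat -> I -> R) : Prop :=
  frac_alloc a w B y /\ (forall t i, y t i = 0 \/ y t i = 1).

Definition SW (R : realType) (I : finType) (v rho : I -> R) (a : I -> nat)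
  (x : nat -> I -> R) (T : nat) : R :=
  \sum_(1 <= t < T.+1) \sum_(i : I) x t i * vt v rho a i t.

Definition realize (R : realType) (I : finType) (x : nat -> I -> bool)
  : nat -> I -> R := fun t i => (x t i)%:R.

Definition served (I : finType) (x : nat -> I -> bool) (t : nat) : {set I} :=
  [set i | [exists s : 'I_t, (0 < s)%N && x s i]].

Definition unserved (I : finType) (a : I -> nat) (x : nat -> I -> bool)
  (t : nat) : {set I} :=
  [set i | (a i <= t)%N && (i \notin served x t)].

Definition alg_step (R : realType) (I : finType) (m : nat) (a : I -> nat)
  (w : I -> 'I_m -> R) (B : 'I_m -> R) (x : nat -> I -> bool) (t : nat) : Prop :=
  (forall i, i \notin unserved a x t -> x t i = false) /\
  feasible w B (realize R x t).

Definition ALGt (R : realType) (I : finType) (v rho : I -> R) (a : I -> nat)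
  (x : nat -> I -> bool) (t : nat) : R :=
  \sum_(i : I) realize R x t i * vt v rho a i t.

(* OPT^t : max over z in {0,1}^{U_t} (i.e. subsets S of U_t) satisfying
   the capacities. The empty set is feasible and values are >= 0, so the
   neutral element 0 of the max does not change the value. *)
Definition OPTt (R : realType) (I : finType) (m : nat) (v rho : I -> R)
  (a : I -> nat) (w : I -> 'I_m -> R) (B : 'I_m -> R) (U : {set I}) (t : nat) : R :=
  \big[Num.max/0]_(S : {set I} | (S \subset U) &&
        [forall j : 'I_m, \sum_(i : I) w i j * (i \in S)%:R <= B j])
     \sum_(i : I) (i \in S)%:R * vt v rho a i t.

(* OPT^{*t} : max (= sup, attained) over z in [0,1]^{U_t} satisfying capacities *)
Definition OPTstar (R : realType) (I : finType) (m : nat) (v rho : I -> R)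
  (a : I -> nat) (w : I -> 'I_m -> R) (B : 'I_m -> R) (U : {set I}) (t : nat) : R :=
  sup [set r : R | exists z : I -> R,
        [/\ (forall i, 0 <= z i <= 1), (forall i, i \notin U -> z i = 0),
            feasible w B z & r = \sum_(i : I) z i * vt v rho a i t]].

(* Main.v *)
Require Import Defs.
From HB Require Import structures.
From mathcomp Require Import all_boot all_order all_algebra.
From mathcomp Require Import classical_sets reals.
Import Order.TTheory GRing.Theory Num.Theory.
Local Open Scope ring_scope.

Section Helpers.
Variables (R : realType) (I : finType) (m : nat) (B : 'I_m -> R)
  (a : I -> nat) (v rho : I -> R) (w : I -> 'I_m -> R)
  (x : nat -> I -> bool) (lam : R).
Hypotheses (Hv : forall i, 0 <= v i) (Hrho : forall i, 0 <= rho i <= 1)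
  (Hw : forall i j, 0 <= w i j)
  (Halg : forall t, (1 <= t)%N -> alg_step a w B x t).

Lemma vt_ge0 i t : 0 <= vt v rho a i t.
Proof.
rewrite /vt; apply: mulr_ge0 => //; apply: exprn_ge0.
by case/andP: (Hrho i) => _ h; rewrite subr_ge0.
Qed.

Lemma vt_mono i s t : (s <= t)%N -> vt v rho a i t <= vt v rho a i s.
Proof.
move=> st; rewrite /vt; apply: ler_wpM2l => //.
case/andP: (Hrho i) => h0 h1.
apply: ler_wiXn2l; first by rewrite subr_ge0.
  by rewrite lerBlDr lerDl.
by apply: leq_sub2r.
Qed.

Lemma uniq_serve i s s' : (0 < s)%N -> (0 < s')%N -> x s i -> x s' i -> s = s'.
Proof.
move=> s0 s'0 xs xs'.
wlog lt : s s' s0 s'0 xs xs' / (s < s')%N.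
  move=> H; case: (ltngtP s s') => h; first exact: H.
    by apply/esym/H.
  done.
have [H1 _] := Halg _ s'0.
have : i \notin unserved a x s'.
  rewrite /unserved inE negb_and; apply/orP; right; rewrite negbK.
  rewrite /served inE; apply/existsP; exists (Ordinal lt) => /=.
  by rewrite s0 xs.
by move/H1; rewrite xs'.
Qed.

Lemma sum_point (f : nat -> R) s n k : (forall t, 0 <= f t) -> (n <= s < k)%N ->
  f s <= \sum_(n <= t < k) f t.
Proof.
move=> f0 /andP[ns sk].
rewrite (big_cat_nat (n:=s)) //=; last exact: ltnW.
rewrite (big_ltn sk) addrCA lerDl addr_ge0 //; by apply: sumr_ge0.
Qed.

Lemma served_bound (y : nat -> I -> R) T i :
  frac_alloc a w B y ->
  \sum_(1 <= t < T.+1) (i \in served x t)%:R * (y t i * vt v rho a i t)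
  <= \sum_(1 <= t < T.+1) realize R x t i * vt v rho a i t.
Proof.
case=> Hy _ Hsum _.
have y0 t : 0 <= y t i by case/andP: (Hy t i).
have rhs0 : 0 <= \sum_(1 <= t < T.+1) realize R x t i * vt v rho a i t.
  by apply: sumr_ge0 => t _; rewrite mulr_ge0 ?vt_ge0 // /realize ler0n.
case: (boolP [exists s : 'I_T.+1, (0 < s)%N && x s i]) => [/existsP[s /andP[s0 xs]]|Hn].
- apply: (@le_trans _ _ (\sum_(1 <= t < T.+1) y t i * vt v rho a i s)).
    apply: ler_sum_nat => t /andP[t1 tT].
    case: (boolP (i \in served x t)) => Hs; last by rewrite mul0r mulr_ge0 ?vt_ge0.
    rewrite mul1r; apply: ler_wpM2l => //; apply: vt_mono.
    move: Hs; rewrite inE => /existsP[s' /andP[s'0 xs']].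
    have := uniq_serve _ _ _ s0 s'0 xs xs' => ->.
    exact: ltnW.
  rewrite -mulr_suml.
  apply: (@le_trans _ _ (vt v rho a i s)).
    rewrite -[X in _ <= X]mul1r; apply: ler_wpM2r; first exact: vt_ge0.
    apply: le_trans (Hsum i T.+1).
    rewrite -(big_mkord xpredT (fun t => y t i)) (big_ltn (m:=0)) //= lerDr.
    done.
  have -> : vt v rho a i s = realize R x s i * vt v rho a i s by rewrite /realize xs mul1r.
  apply: (sum_point (fun t => realize R x t i * vt v rho a i t)).
    by move=> t; rewrite mulr_ge0 ?vt_ge0 // /realize ler0n.
  by rewrite s0 ltn_ord.
- rewrite big_nat_cond big1 // => t /andP[/andP[t1 tT] _].
  case: (boolP (i \in served x t)) => Hs; last by rewrite mul0r.
  exfalso; move: Hs; rewrite inE => /existsP[s' /andP[s'0 xs']].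
  move/existsP: Hn; apply.
  have lt : (s' < T.+1)%N by apply: leq_trans (ltn_ord s') (ltnW tT).
  by exists (Ordinal lt); rewrite /= s'0 xs'.
Qed.

Lemma main_bound (O : nat -> R) (y : nat -> I -> R) T :
  0 <= lam -> frac_alloc a w B y ->
  (forall t, (1 <= t)%N ->
     \sum_i (i \in unserved a x t)%:R * (y t i * vt v rho a i t) <= O t) ->
  (forall t, (1 <= t)%N -> lam * O t <= ALGt v rho a x t) ->
  lam / (1 + lam) * SW v rho a y T <= SW v rho a (realize R x) T.
Proof.
move=> lam0 Hf HO HA.
have Hf' := Hf; case: Hf' => Hy Hya _ _.
set A := SW v rho a (realize R x) T.
set P1 := \sum_(1 <= t < T.+1) \sum_i (i \in unserved a x t)%:R * (y t i * vt v rho a i t).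
set P2 := \sum_(1 <= t < T.+1) \sum_i (i \in served x t)%:R * (y t i * vt v rho a i t).
have A0 : 0 <= A.
  apply: sumr_ge0 => t _; apply: sumr_ge0 => i _.
  by rewrite mulr_ge0 ?vt_ge0 // /realize ler0n.
have HS : SW v rho a y T <= P1 + P2.
  rewrite /SW /P1 /P2 -big_split; apply: ler_sum => t _.
  rewrite -big_split; apply: ler_sum => i _ /=.
  have y0 : 0 <= y t i by case/andP: (Hy t i).
  have p0 : 0 <= y t i * vt v rho a i t by rewrite mulr_ge0 ?vt_ge0.
  case: (boolP (i \in unserved a x t)) => HU.
    by rewrite mul1r lerDl mulr_ge0 // ler0n.
  rewrite mul0r add0r.
  move: HU; rewrite inE negb_and -ltnNge negbK => /orP[lt|HS].
    by rewrite Hya // mul0r mulr_ge0 // ler0n.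
  by rewrite HS mul1r.
have H1 : lam * P1 <= A.
  rewrite /P1 mulr_sumr; apply: ler_sum_nat => t /andP[t1 _].
  exact: le_trans (ler_wpM2l lam0 (HO t t1)) (HA t t1).
have H2 : P2 <= A.
  rewrite /P2 /A /SW exchange_big [X in _ <= X]exchange_big /=.
  apply: ler_sum => i _; exact: served_bound.
have lp : 0 < 1 + lam by rewrite ltr_pwDl.
rewrite mulrAC ler_pdivrMr // mulrDr mulr1 addrC.
apply: le_trans (ler_wpM2l lam0 HS) _.
rewrite mulrDr addrC; apply: lerD => //.
by rewrite mulrC ler_wpM2r.
Qed.

End Helpers.

Theorem lemma3 (R : realType) (I : finType) (m : nat) (B : 'I_m -> R)
  (a : I -> nat) (v rho : I -> R) (w : I -> 'I_m -> R)
  (x : nat -> I -> bool) (lam : R) :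
  (forall j, 0 < B j) ->
  (forall i, (1 <= a i)%N) ->
  (forall i, 0 <= v i) ->
  (forall i, 0 <= rho i <= 1) ->
  (forall i j, 0 <= w i j) ->
  (forall t, (1 <= t)%N -> alg_step a w B x t) ->
  0 <= lam ->
  ((forall t, (1 <= t)%N ->
      lam * OPTt v rho a w B (unserved a x t) t <= ALGt v rho a x t) ->
   forall (y : nat -> I -> R) (T : nat), int_alloc a w B y ->
     lam / (1 + lam) * SW v rho a y T <= SW v rho a (realize R x) T)
  /\
  ((forall t, (1 <= t)%N ->
      lam * OPTstar v rho a w B (unserved a x t) t <= ALGt v rho a x t) ->
   forall (y : nat -> I -> R) (T : nat), frac_alloc a w B y ->
     lam / (1 + lam) * SW v rho a y T <= SW v rho a (realize R x) T).
Proof.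
move=> HB Ha Hv Hrho Hw Halg lam0; split.
- move=> HO y T [Hf H01].
  apply: (@main_bound R I m B a v rho w x lam Hv Hrho Halg (fun t => OPTt v rho a w B (unserved a x t) t) y T) => //.
  move=> t t1.
  case: (Hf) => Hy _ _ Hfeas.
  set S := [set i in unserved a x t | y t i == 1].
  have E : forall i, (i \in unserved a x t)%:R * y t i = (i \in S)%:R :> R.
    move=> i.
    have -> : (i \in S) = (i \in unserved a x t) && (y t i == 1) by rewrite /S finset.in_set.
    case: (i \in unserved a x t); rewrite ?mul0r ?mul1r //=.
    by case: (H01 t i) => ->; rewrite ?eqxx // eq_sym oner_eq0.
  apply: (@le_trans _ _ (\sum_i (i \in S)%:R * vt v rho a i t)).
    by apply: ler_sum => i _; rewrite mulrA E.
  rewrite /OPTt; apply: (@le_bigmax_cond _ _ _ 0 S _ (fun S : {set I} =>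
     \sum_i (i \in S)%:R * vt v rho a i t)).
  apply/andP; split.
    by apply/fintype.subsetP => i; rewrite finset.in_set => /andP[].
  apply/forallP => j; apply: le_trans (Hfeas t j).
  apply: ler_sum => i _; apply: ler_wpM2l => //.
  rewrite -E; case: (i \in unserved a x t); rewrite ?mul0r ?mul1r //.
  by case/andP: (Hy t i).
- move=> HO y T Hf.
  apply: (@main_bound R I m B a v rho w x lam Hv Hrho Halg (fun t => OPTstar v rho a w B (unserved a x t) t) y T) => //.
  move=> t t1.
  case: (Hf) => Hy _ _ Hfeas.
  set z := fun i => (i \in unserved a x t)%:R * y t i.
  have z01 : forall i, 0 <= z i <= 1.
    move=> i; rewrite /z; case: (i \in unserved a x t); rewrite ?mul0r ?mul1r ?lexx ?ler01 //.
  apply: sup_upper_bound.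
    split.
      exists (\sum_i z i * vt v rho a i t); exists z; split => //.
      + by move=> i /negbTE; rewrite /z => ->; rewrite mul0r.
      + move=> j; apply: le_trans (Hfeas t j).
        apply: ler_sum => i _; apply: ler_wpM2l => //; rewrite /z.
        case: (i \in unserved a x t); rewrite ?mul0r ?mul1r //.
        by case/andP: (Hy t i).
    exists (\sum_i vt v rho a i t) => r [z' [Hz' _ _ ->]].
    apply: ler_sum => i _; rewrite -[X in _ <= X]mul1r.
    apply: ler_wpM2r; first exact: vt_ge0.
    by case/andP: (Hz' i).
  exists z; split => //.
  + by move=> i /negbTE; rewrite /z => ->; rewrite mul0r.
  + move=> j; apply: le_trans (Hfeas t j).
    apply: ler_sum => i _; apply: ler_wpM2l => //; rewrite /z.
    case: (i \in unserved a x t); rewrite ?mul0r ?mul1r //.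
    by case/andP: (Hy t i).
  + by apply: eq_bigr => i _; rewrite /z mulrA.
Qed.
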